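(* Let $a>0$, $b,c\ge 0$, and consider the system $$\dot x=x(1-y+cx-axz),\qquad \dot y=y(-1+x),\qquad \dot z=z(-b+ax^2).$$ Let $f$ be an irreducible Darboux polynomial of degree greater than one with non-zero cofactor $$K=\alpha_0+\alpha_1x+\alpha_2y+\alpha_3z+\alpha_4x^2+\alpha_5xy+\alpha_6xz+\alpha_7y^2+\alpha_8yz+\alpha_9z^2,\quad \alpha_i\in\mathbb{C}.$$ Then $\alpha_5=\alpha_7=\alpha_8=\alpha_9=0$, and $\alpha_4=N_4a$, $\alpha_6=-N_6a$ for some $N_4,N_6\in\mathbb{N}\cup\{0\}$.
   Context: A Darboux polynomial is $f\in\mathbb{C}[x,y,z]$ with $x(1-y+cx-axz)f_x+y(-1+x)f_y+z(-b+ax^2)f_z=Kf$ for a polynomial cofactor $K$ of degree at most two. *)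

(* Defs.v *)
From HB Require Import structures.
From mathcomp Require Import all_boot all_order all_algebra.
From mathcomp Require Import mpoly.
Set Implicit Arguments. Unset Strict Implicit. Unset Printing Implicit Defensive.
Import Order.TTheory GRing.Theory Num.Theory.
Local Open Scope ring_scope.

Definition i0 : 'I_3 := @Ordinal 3 0 isT.
Definition i1 : 'I_3 := @Ordinal 3 1 isT.
Definition i2 : 'I_3 := @Ordinal 3 2 isT.

Section Defs.
Variable C : numClosedFieldType.

Definition vx : {mpoly C[3]} := 'X_i0.
Definition vy : {mpoly C[3]} := 'X_i1.
Definition vz : {mpoly C[3]} := 'X_i2.

Definition Xf (a b c : C) (f : {mpoly C[3]}) : {mpoly C[3]} :=
  vx * (1 - vy + c *: vx - a *: (vx * vz)) * f^`M(i0)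
  + vy * (-1 + vx) * f^`M(i1)
  + vz * (- b%:MP + a *: (vx ^+ 2)) * f^`M(i2).

(* f is a Darboux polynomial with cofactor K (K of total degree <= 2). *)
Definition darboux (a b c : C) (f K : {mpoly C[3]}) : Prop :=
  Xf a b c f = K * f /\ (msize K <= 3)%N.

Definition irreducible_mpoly (f : {mpoly C[3]}) : Prop :=
  f != 0 /\ f \isn't a GRing.unit /\
  forall g h : {mpoly C[3]}, f = g * h -> g \is a GRing.unit \/ h \is a GRing.unit.

Definition tdeg (f : {mpoly C[3]}) : nat := (msize f).-1.

Definition cofK (al0 al1 al2 al3 al4 al5 al6 al7 al8 al9 : C) : {mpoly C[3]} :=
  al0%:MP + al1 *: vx + al2 *: vy + al3 *: vz + al4 *: (vx ^+ 2)
  + al5 *: (vx * vy) + al6 *: (vx * vz) + al7 *: (vy ^+ 2)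
  + al8 *: (vy * vz) + al9 *: (vz ^+ 2).
End Defs.

(* Main.v *)
Require Import Defs.
From HB Require Import structures.
From mathcomp Require Import all_boot all_order all_algebra.
From mathcomp Require Import mpoly.
From mathcomp Require Import zify ring.
From Stdlib Require Import Classical_Prop.
Import Order.TTheory GRing.Theory Num.Theory.
Local Open Scope ring_scope.


Section G.
Variable C : numClosedFieldType.
Implicit Types (p : {mpoly C[3]}) (v w : 'I_3 -> int).

Definition G p v : C :=
  if [forall s, 0 <= v s] then p@_[multinom `|v s|%N | s < 3] else 0.

Lemma Gext p v w : v =1 w -> G p v = G p w.
Proof.
move=> e; rewrite /G.
have -> : [forall s, 0 <= v s] = [forall s, 0 <= w s].
  by apply: eq_forallb => s; rewrite e.
have -> : [multinom `|v s|%N | s < 3] = [multinom `|w s|%N | s < 3].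
  by apply/mnmP => s; rewrite !mnmE e.
by [].
Qed.

Lemma GD p q v : G (p + q) v = G p v + G q v.
Proof. by rewrite /G; case: ifP => _; rewrite ?mcoeffD ?addr0. Qed.
Lemma GN p v : G (- p) v = - G p v.
Proof. by rewrite /G; case: ifP => _; rewrite ?mcoeffN ?oppr0. Qed.
Lemma GB p q v : G (p - q) v = G p v - G q v.
Proof. by rewrite GD GN. Qed.
Lemma GZ c p v : G (c *: p) v = c * G p v.
Proof. by rewrite /G; case: ifP => _; rewrite ?mcoeffZ ?mulr0. Qed.
Lemma G0 v : G 0 v = 0.
Proof. by rewrite /G; case: ifP => _; rewrite ?mcoeff0. Qed.

Lemma coefMX0 p (s m : 'X_{1..3}) : ~~ (s <= m)%MM -> (p * 'X_[s])@_m = 0.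
Proof.
move=> H; apply/eqP; rewrite mcoeff_eq0 (perm_mem (msuppMX p s)).
apply/mapP => -[m' _ em]; move: H; rewrite em lem_addr //.
Qed.

Lemma GXt p v t : G (p * 'X_t) v = G p (fun s => v s - (t == s)%:Z).
Proof.
rewrite /G.
case: (boolP [forall s, 0 <= v s]) => Hv.
  case: (boolP [forall s, 0 <= v s - (t == s)%:Z]) => Hv'.
    have -> : [multinom `|v s|%N | s < 3] = (U_(t) + [multinom `|v s - (t == s)%:Z|%N | s < 3])%MM.
      apply/mnmP => s; rewrite mnmDE !mnmE ?mnm1E.
      move/forallP: Hv' => /(_ s); case: (t == s) => /=; lia.
    by rewrite mcoeffMX.
  apply: coefMX0; rewrite lep1mP mnmE.
  move/forallP: Hv => Hv.
  rewrite negbK; case/forallPn: Hv' => s Hs; have := Hv s.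
  move: Hs; case: eqP => [<-|_] /=; lia.
case: ifP => // Hv'; case/negP: Hv; apply/forallP => s.
move/forallP: Hv' => /(_ s); lia.
Qed.

Lemma GE p v t : G ('X_t * p^`M(t)) v = (v t)%:~R * G p v.
Proof.
rewrite mulrC GXt /G.
case: (boolP [forall s, 0 <= v s]) => Hv.
  case: (boolP [forall s, 0 <= v s - (t == s)%:Z]) => Hv'.
    rewrite mcoeff_mderiv mnmE.
    have -> : ([multinom `|v s - (t == s)%:Z|%N | s < 3] + U_(t))%MM = [multinom `|v s|%N | s < 3].
      apply/mnmP => s; rewrite mnmDE !mnmE ?mnm1E.
      move/forallP: Hv' => /(_ s); case: (t == s) => /=; lia.
    rewrite -mulr_natl; congr (_ * _).
    move/forallP: Hv' => /(_ t); rewrite eqxx => h.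
    have -> : (`|v t - 1|.+1)%N = `|v t|%N by lia.
    have e : v t = (`|v t|%N)%:Z by lia.
    by rewrite [in RHS]e.
  have : v t = 0.
    move/forallP: Hv => Hv; case/forallPn: Hv' => s Hs; have := Hv s.
    move: Hs; case: eqP => [<-|_] /=; lia.
  by move=> ->; rewrite mul0r.
rewrite mulr0; case: ifP => // H; case/negP: Hv; apply/forallP => s.
move/forallP: H => /(_ s); lia.
Qed.

End G.
Arguments G {C} p v.


Section T.
Variable C : numClosedFieldType.
Implicit Types (p : {mpoly C[3]}).

Definition tri (i j k : int) : 'I_3 -> int := fun s => nth 0 [:: i; j; k] s.

Lemma GX0 p i j k : G (p * vx C) (tri i j k) = G p (tri (i-1) j k).
Proof. by rewrite GXt; apply: Gext => -[[|[|[|s]]] Hs] //=; rewrite /tri /= ?subr0. Qed.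
Lemma GX1 p i j k : G (p * vy C) (tri i j k) = G p (tri i (j-1) k).
Proof. by rewrite GXt; apply: Gext => -[[|[|[|s]]] Hs] //=; rewrite /tri /= ?subr0. Qed.
Lemma GX2 p i j k : G (p * vz C) (tri i j k) = G p (tri i j (k-1)).
Proof. by rewrite GXt; apply: Gext => -[[|[|[|s]]] Hs] //=; rewrite /tri /= ?subr0. Qed.
Lemma GE0 p i j k : G (vx C * p^`M(i0)) (tri i j k) = i%:~R * G p (tri i j k).
Proof. by rewrite GE. Qed.
Lemma GE1 p i j k : G (vy C * p^`M(i1)) (tri i j k) = j%:~R * G p (tri i j k).
Proof. by rewrite GE. Qed.
Lemma GE2 p i j k : G (vz C * p^`M(i2)) (tri i j k) = k%:~R * G p (tri i j k).
Proof. by rewrite GE. Qed.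

Lemma expand (a b c : C) f (al0 al1 al2 al3 al4 al5 al6 al7 al8 al9 : C) :
  let x := vx C in let y := vy C in let z := vz C in
  let E0 := x * f^`M(i0) in let E1 := y * f^`M(i1) in let E2 := z * f^`M(i2) in
  Xf a b c f - cofK al0 al1 al2 al3 al4 al5 al6 al7 al8 al9 * f =
  E0 - E0 * y + c *: (E0 * x) - a *: (E0 * x * z) - E1 + E1 * x
  - b *: E2 + a *: (E2 * x * x)
  - (al0 *: f + al1 *: (f * x) + al2 *: (f * y) + al3 *: (f * z)
     + al4 *: (f * x * x) + al5 *: (f * x * y) + al6 *: (f * x * z)
     + al7 *: (f * y * y) + al8 *: (f * y * z) + al9 *: (f * z * z)).
Proof.
rewrite /Xf /cofK /=. rewrite -!mul_mpolyC. ring.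
Qed.

End T.


Lemma maxZ (Q : int -> Prop) (D : int) :
  (exists n, Q n) -> (forall n, Q n -> n <= D) ->
  exists n, Q n /\ forall m, Q m -> m <= n.
Proof.
move=> [n0 Qn0] bd.
case: (classic (exists n, Q n /\ forall m, Q m -> m <= n)) => // Hno.
exfalso.
have step : forall n, Q n -> exists m, Q m /\ n < m.
  move=> n Qn; case: (classic (exists m, Q m /\ n < m)) => // H'.
  exfalso; apply: Hno; exists n; split => // m Qm.
  case: (lerP m n) => // nm; exfalso; apply: H'; by exists m.
have it : forall t : nat, exists n, Q n /\ n0 + t%:Z <= n.
  elim => [|t [n [Qn le]]]; first by exists n0; split => //; lia.
  have [m [Qm lt]] := step n Qn; exists m; split => //; lia.
have [n [Qn le]] := it (absz (D - n0 + 1)).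
have := bd n Qn; lia.
Qed.

Lemma max2 (P : int -> int -> int -> Prop) (w1 w2 : int -> int -> int -> int) (B : int) :
  (exists i j k, P i j k) ->
  (forall i j k, P i j k -> w1 i j k <= B /\ w2 i j k <= B) ->
  exists i j k, P i j k /\ forall x y z, P x y z ->
    w1 x y z < w1 i j k \/ (w1 x y z = w1 i j k /\ w2 x y z <= w2 i j k).
Proof.
move=> [i [j [k Pijk]]] bd.
have [M [[i1 [j1 [k1 [P1 e1]]]] HM]] :=
  @maxZ (fun n => exists i j k, P i j k /\ w1 i j k = n) B
   (ex_intro _ _ (ex_intro _ i (ex_intro _ j (ex_intro _ k (conj Pijk erefl)))))
   (fun n '(ex_intro i (ex_intro j (ex_intro k (conj p e)))) =>
        ltac:(have := bd i j k p; lia)).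
have [N [[i2 [j2 [k2 [P2 [e2 e2']]]]] HN]] :=
  @maxZ (fun n => exists i j k, P i j k /\ w1 i j k = M /\ w2 i j k = n) B
   (ex_intro _ _ (ex_intro _ i1 (ex_intro _ j1 (ex_intro _ k1 (conj P1 (conj e1 erefl))))))
   (fun n '(ex_intro i (ex_intro j (ex_intro k (conj p (conj _ e))))) =>
        ltac:(have := bd i j k p; lia)).
exists i2, j2, k2; split => // x y z Pxyz.
have h1 := HM _ (ex_intro _ x (ex_intro _ y (ex_intro _ z (conj Pxyz erefl)))).
case: (eqVneq (w1 x y z) M) => e.
  have h2 := HN _ (ex_intro _ x (ex_intro _ y (ex_intro _ z (conj Pxyz (conj e erefl))))).
  right; lia.
left; lia.
Qed.

Lemma gzero (C : numClosedFieldType) (g : int -> int -> int -> C) (w1 w2 : int -> int -> int -> int) i0 j0 k0 :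
  (forall x y z, g x y z != 0 ->
    w1 x y z < w1 i0 j0 k0 \/ (w1 x y z = w1 i0 j0 k0 /\ w2 x y z <= w2 i0 j0 k0)) ->
  forall x y z, w1 i0 j0 k0 < w1 x y z \/ (w1 x y z = w1 i0 j0 k0 /\ w2 i0 j0 k0 < w2 x y z) ->
  g x y z = 0.
Proof.
move=> H x y z h; case: (eqVneq (g x y z) 0) => // /H; lia.
Qed.

Lemma geq (C : Type) (g : int -> int -> int -> C) x y z i j k :
  x = i -> y = j -> z = k -> g x y z = g i j k.
Proof. by move=> -> -> ->. Qed.

Lemma fin (C : numClosedFieldType) (x y : C) : y != 0 -> x * y = 0 -> x = 0.
Proof. by move=> hy /eqP; rewrite mulf_eq0 (negbTE hy) orbF => /eqP. Qed.

Arguments fin {C x y}.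
Ltac zap g gz i0 j0 k0 :=
  repeat match goal with
  | |- context [g ?x ?y ?z] =>
     tryif (constr_eq x i0; constr_eq y j0; constr_eq z k0) then fail
     else first [ rewrite (gz x y z); [| cbv beta; lia]
                | rewrite (@geq _ g x y z i0 j0 k0); [| lia | lia | lia] ]
  end.

Section Core.
Variable C : numClosedFieldType.

Lemma core (a b c al0 al1 al2 al3 al4 al5 al6 al7 al8 al9 : C)
  (g : int -> int -> int -> C)
  (gneg : forall i j k, g i j k != 0 -> 0 <= i /\ 0 <= j /\ 0 <= k)
  (D : int) (gbd : forall i j k, g i j k != 0 -> i <= D /\ j <= D /\ k <= D)
  (gnz : exists i j k, g i j k != 0)
  (Phi : forall i j k,
    i%:~R * g i j k - i%:~R * g i (j-1) k + c * ((i-1)%:~R * g (i-1) j k)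
    - a * ((i-1)%:~R * g (i-1) j (k-1)) - j%:~R * g i j k + j%:~R * g (i-1) j k
    - b * (k%:~R * g i j k) + a * (k%:~R * g (i-1-1) j k)
    - (al0 * g i j k + al1 * g (i-1) j k + al2 * g i (j-1) k + al3 * g i j (k-1)
       + al4 * g (i-1-1) j k + al5 * g (i-1) (j-1) k + al6 * g (i-1) j (k-1)
       + al7 * g i (j-1-1) k + al8 * g i (j-1) (k-1) + al9 * g i j (k-1-1)) = 0) :
  [/\ al5 = 0, al7 = 0, al8 = 0, al9 = 0 &
      exists N4 N6 : nat, al4 = N4%:R * a /\ al6 = - (N6%:R * a)].
Proof.
have bd : forall (w1 w2 : int -> int -> int -> int) B,
   (forall i j k, 0 <= i <= D -> 0 <= j <= D -> 0 <= k <= D -> w1 i j k <= B /\ w2 i j k <= B) ->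
   exists i j k, g i j k != 0 /\ forall x y z,
    w1 i j k < w1 x y z \/ (w1 x y z = w1 i j k /\ w2 i j k < w2 x y z) -> g x y z = 0.
  move=> w1 w2 B hB.
  have [|i [j [k [nz H]]]] := @max2 (fun i j k => g i j k != 0) w1 w2 B gnz.
    move=> i j k nz.
    have := gneg _ _ _ nz; have := gbd _ _ _ nz => ? ?; apply: hB; lia.
  by exists i, j, k; split => //; apply: gzero.
have e9 : al9 = 0.
  have [i0 [j0 [k0 [nz gz]]]] := bd (fun i j k => k) (fun _ _ _ => 0) D ltac:(move=> *; lia).
  apply: oppr_inj; rewrite oppr0; apply: (fin nz); apply: etrans (Phi i0 j0 (k0 + 2)).
  zap g gz i0 j0 k0; ring.
subst al9.
have e8 : al8 = 0.
  have [i0 [j0 [k0 [nz gz]]]] := bd (fun i j k => j + k) (fun i j k => k) (D + D) ltac:(move=> *; lia).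
  apply: oppr_inj; rewrite oppr0; apply: (fin nz); apply: etrans (Phi i0 (j0 + 1) (k0 + 1)).
  zap g gz i0 j0 k0; ring.
subst al8.
have e7 : al7 = 0.
  have [i0 [j0 [k0 [nz gz]]]] := bd (fun i j k => j + k) (fun _ _ _ => 0) (D + D) ltac:(move=> *; lia).
  apply: oppr_inj; rewrite oppr0; apply: (fin nz); apply: etrans (Phi i0 (j0 + 2) k0).
  zap g gz i0 j0 k0; ring.
subst al7.
have e5 : al5 = 0.
  have [i0 [j0 [k0 [nz gz]]]] := bd (fun i j k => j) (fun i j k => i + j + k) (D + D + D) ltac:(move=> *; lia).
  apply: oppr_inj; rewrite oppr0; apply: (fin nz); apply: etrans (Phi (i0 + 1) (j0 + 1) k0).
  zap g gz i0 j0 k0; ring.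
subst al5.
split => //.
have [N6 e6] : exists N6 : nat, al6 = - (N6%:R * a).
  have [i0 [j0 [k0 [nz gz]]]] := bd (fun i j k => i + j + k) (fun i j k => - i) (D + D + D) ltac:(move=> *; lia).
  have h : (- (a * i0%:~R) - al6) * g i0 j0 k0 = 0.
    apply: etrans (Phi (i0 + 1) j0 (k0 + 1)).
    zap g gz i0 j0 k0; ring.
  have := fin nz h => h'.
  have := gneg _ _ _ nz => -[hi _].
  exists (absz i0).
  have -> : (absz i0)%:R = i0%:~R :> C by rewrite -[in RHS](gez0_abs hi).
  rewrite (_ : al6 = - (a * i0%:~R) - (- (a * i0%:~R) - al6)); last by ring.
  by rewrite h' subr0 mulrC.
have [N4 e4] : exists N4 : nat, al4 = N4%:R * a.
  have [i0 [j0 [k0 [nz gz]]]] := bd (fun i j k => i + j + k) (fun i j k => i) (D + D + D) ltac:(move=> *; lia).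
  have h : (a * k0%:~R - al4) * g i0 j0 k0 = 0.
    apply: etrans (Phi (i0 + 2) j0 k0).
    zap g gz i0 j0 k0; ring.
  have := fin nz h => h'.
  have := gneg _ _ _ nz => -[_ [_ hk]].
  exists (absz k0).
  have -> : (absz k0)%:R = k0%:~R :> C by rewrite -[in RHS](gez0_abs hk).
  rewrite (_ : al4 = a * k0%:~R - (a * k0%:~R - al4)); last by ring.
  by rewrite h' subr0 mulrC.
by exists N4, N6.
Qed.
End Core.


Theorem lemma4p2 (C : numClosedFieldType) (a b c : C)
  (ha : 0 < a) (hb : 0 <= b) (hc : 0 <= c)
  (f : {mpoly C[3]}) (al0 al1 al2 al3 al4 al5 al6 al7 al8 al9 : C) :
  irreducible_mpoly f ->
  (1 < tdeg f)%N ->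
  cofK al0 al1 al2 al3 al4 al5 al6 al7 al8 al9 != 0 ->
  darboux a b c f (cofK al0 al1 al2 al3 al4 al5 al6 al7 al8 al9) ->
  [/\ al5 = 0, al7 = 0, al8 = 0, al9 = 0 &
      exists N4 N6 : nat, al4 = N4%:R * a /\ al6 = - (N6%:R * a)].
Proof.
move=> [fnz _] _ _ [hX _].
pose D : int := (\max_(m <- msupp f) (m i0 + m i1 + m i2))%N.
apply: (@core C a b c al0 al1 al2 al3 al4 al5 al6 al7 al8 al9
          (fun i j k => G f (tri i j k))) .
- move=> i j k; rewrite /G; case: ifP => [/forallP H _|]; last by rewrite eqxx.
  have := H i0; have := H i1; have := H i2; rewrite /tri /=; lia.
- instantiate (1 := D).
  move=> i j k; rewrite /G; case: ifP => [/forallP H|]; last by rewrite eqxx.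
  rewrite -mcoeff_msupp => /(@leq_bigmax_seq _ _ xpredT (fun m : 'X_{1..3} => (m i0 + m i1 + m i2)%N)) => /(_ isT).
  rewrite !mnmE -/D.
  have := H i0; have := H i1; have := H i2; rewrite /tri /=; lia.
- have : msupp f != [::] by rewrite msupp_eq0.
  case E: (msupp f) => [|m s] // _.
  have : m \in msupp f by rewrite E mem_head.
  rewrite mcoeff_msupp => nz.
  exists (m i0)%:Z, (m i1)%:Z, (m i2)%:Z.
  rewrite /G; case: ifP => [_|/negP []]; last first.
    by apply/forallP => -[[|[|[|s']]] Hs] //=; rewrite /tri /=.
  have -> : [multinom `|tri (m i0) (m i1) (m i2) s|%N | s < 3] = m.
    apply/mnmP => -[[|[|[|s']]] Hs] //=; rewrite mnmE /tri /=.
    - by congr (m _); apply: val_inj.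
    - by congr (m _); apply: val_inj.
    - by congr (m _); apply: val_inj.
  exact: nz.
- move=> i j k.
  have := congr1 (fun P => G P (tri i j k)) (@expand C a b c f al0 al1 al2 al3 al4 al5 al6 al7 al8 al9).
  rewrite /= hX subrr G0 => H; apply: etrans (esym H).
  rewrite !(GB, GD, GN, GZ).
  rewrite ?(GX0, GX1, GX2).
  rewrite ?(GX0, GX1, GX2).
  rewrite !(GE0, GE1, GE2).
  ring.
Qed.
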